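(* Let $G$ be a simple connected graph with $n$ vertices and $m$ edges, with maximum degree $\Delta$. Let $k=\left\lceil \frac{2m-n+1}{\Delta}\right\rceil$. Then $\rho_{ABC}(G)\le \sqrt{\Delta+k-2}$.
   Context: For a simple connected graph $G$ with vertex set $\{v_1,\dots,v_n\}$ and degrees $d_i$, the ABC matrix is $M(G)=(m_{ij})_{n\times n}$ with $m_{ij}=\sqrt{(d_i+d_j-2)/(d_id_j)}$ if $v_iv_j$ is an edge and $m_{ij}=0$ otherwise. The ABC spectral radius $\rho_{ABC}(G)$ is the largest eigenvalue of $M(G)$. *)

(* Defs.v *)
From HB Require Import structures.
From mathcomp Require Import all_boot all_order all_algebra.
From mathcomp Require Import reals.
Set Implicit Arguments. Unset Strict Implicit. Unset Printing Implicit Defensive.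
Import Order.TTheory GRing.Theory Num.Theory.
Local Open Scope ring_scope.

Definition simple_graph (n : nat) (e : rel 'I_n) : Prop :=
  symmetric e /\ irreflexive e.

Definition connected_graph (n : nat) (e : rel 'I_n) : Prop :=
  forall x y : 'I_n, connect e x y.

Definition deg (n : nat) (e : rel 'I_n) (v : 'I_n) : nat := #|[set u | e v u]|.

Definition nedges (n : nat) (e : rel 'I_n) : nat :=
  #|[set E : {set 'I_n} | [exists x, exists y, e x y && (E == [set x; y])]]|.

Definition maxdeg (n : nat) (e : rel 'I_n) : nat := (\max_(v : 'I_n) deg e v)%N.

Definition ABC_matrix (R : realType) (n : nat) (e : rel 'I_n) : 'M[R]_n :=
  \matrix_(i, j)
    (if e i j then
       Num.sqrt (((deg e i)%:R + (deg e j)%:R - 2) / ((deg e i)%:R * (deg e j)%:R))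
     else 0).

Definition is_ABC_spectral_radius (R : realType) (n : nat) (e : rel 'I_n) (r : R) : Prop :=
  eigenvalue (ABC_matrix R e) r /\
  (forall l : R, eigenvalue (ABC_matrix R e) l -> l <= r).

(* Main.v *)
Require Import Defs.
From HB Require Import structures.
From mathcomp Require Import all_boot all_order all_algebra.
From mathcomp Require Import reals.
From mathcomp Require Import zify ring lra.
Import Order.TTheory GRing.Theory Num.Theory.
Lemma deg_pos {n} {e : rel 'I_n} : (1 < n)%N -> connected_graph e ->
  forall i, (0 < deg e i)%N.
Proof.
move=> n1 conn i.
have [j ji] : exists j : 'I_n, j != i.
  case: (eqVneq i (Ordinal n1)) => h.
    by exists (Ordinal (ltn_trans (ltnSn 0) n1)); rewrite h.
  by exists (Ordinal n1); rewrite eq_sym.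
have := conn i j => /connectP [[|z p] /= pth lst].
  by move: ji; rewrite lst eqxx.
move: pth => /andP [eiz _].
rewrite /deg card_gt0; apply/set0Pn; exists z; by rewrite inE.
Qed.

Definition ES {n} (e : rel 'I_n) :=
  [set E : {set 'I_n} | [exists x, exists y, e x y && (E == [set x; y])]].

Lemma handshake {n} {e : rel 'I_n} : simple_graph e ->
  (\sum_v deg e v <= 2 * nedges e)%N.
Proof.
move=> [sym irr].
have h1 : forall v, (deg e v <= #|[set E in ES e | v \in E]|)%N.
  move=> v; rewrite /deg -(@card_in_imset _ _ (fun u => [set v; u])).
    apply: subset_leq_card; apply/subsetP => E /imsetP [u]; rewrite inE => evu ->.
    rewrite !inE eqxx orTb andbT; apply/existsP; exists v; apply/existsP; exists u.
    by rewrite evu eqxx.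
  move=> u u' _ _ /= h.
  have : u \in [set v; u'] by rewrite -h set22.
  rewrite !inE => /orP [/eqP uv|/eqP //].
  have : u' \in [set v; u] by rewrite h set22.
  by rewrite !inE uv orbb => /eqP.
apply: (@leq_trans (\sum_v #|[set E in ES e | v \in E]|)); first by apply: leq_sum => v _; apply: h1.
have -> : (\sum_v #|[set E in ES e | v \in E]| = \sum_(E in ES e) #|E|)%N.
  transitivity (\sum_v \sum_(E in ES e) (v \in E : nat))%N.
    apply: eq_bigr => v _; rewrite -sum1_card [LHS]big_mkcond [RHS]big_mkcond /=.
    by apply: eq_bigr => E _; rewrite !inE; case: [exists x, _]; case: (v \in E).
  rewrite exchange_big /=; apply: eq_bigr => E _.
  rewrite -sum1_card [LHS]big_mkcond [RHS]big_mkcond /=; apply: eq_bigr => v _.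
  by case: (in_mem _ _).
rewrite /nedges -/(ES e) mulnC -sum_nat_const; apply: leq_sum => E.
rewrite inE => /existsP [x /existsP [y /andP [_ /eqP ->]]].
by rewrite cards2; case: (x != y).
Qed.

Lemma nbsum {n} {e : rel 'I_n} : (1 < n)%N -> simple_graph e -> connected_graph e ->
  forall i, (\sum_(l | e i l) deg e l + n <= 2 * nedges e + 1)%N.
Proof.
move=> n1 sg conn i.
have dp := deg_pos n1 conn.
have hs := handshake sg.
have key : (\sum_w ((if e i w then deg e w else 0) + 1 + (if w == i then (deg e i).-1 else 0))
           <= \sum_w (deg e w + (if e i w then 1 else 0)))%N.
  apply: leq_sum => w _.
  case: (eqVneq w i) => [->|wi].
    rewrite (proj2 sg i) /=. have := dp i. lia.
  case: (e i w) => /=; have := dp w; lia.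
rewrite !big_split /= -!big_mkcond /= big_pred1_eq sum1_card card_ord in key.
have hd : (\sum_(w | e i w) 1 = deg e i)%N.
  by rewrite sum1_card /deg; apply: eq_card => x; rewrite inE.
rewrite hd in key.
move: key hs; set A := (\sum_(l | e i l) deg e l); set S := (\sum_v deg e v). have := dp i. lia.
Qed.

Local Open Scope ring_scope.
Lemma amgm (R : rcfType) (x r : R) : 0 <= x -> 2 * r * Num.sqrt x <= x + r ^+ 2.
Proof.
move=> x0; have h := sqr_sqrtr x0.
have : 0 <= (Num.sqrt x - r) ^+ 2 by apply: sqr_ge0.
set s := Num.sqrt x in h *; nra.
Qed.

Lemma natkey {d A D K n m2 : nat} : (1 <= d)%N -> (d <= D)%N -> (A <= d*D)%N ->
  (A + n <= m2 + 1)%N -> (m2 + 1 <= n + D*K)%N -> (d*d + A <= d*D + d*K)%N.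
Proof.
move=> h1 h2 h3 h4 h5.
case: (leqP d K) => hk.
  have := leq_mul (leqnn d) hk. lia.
have : (A <= D * K)%N by lia.
nia.
Qed.

Lemma entry_id (R : rcfType) (a b : nat) : (0 < a)%N -> (0 < b)%N ->
  Num.sqrt (a%:R) * Num.sqrt (b%:R) *
    Num.sqrt ((b%:R + a%:R - 2) / (b%:R * a%:R)) = Num.sqrt ((a%:R + b%:R - 2) : R).
Proof.
move=> a0 b0.
have a0' : (0 : R) < a%:R by rewrite ltr0n.
have b0' : (0 : R) < b%:R by rewrite ltr0n.
rewrite -sqrtrM ?ler0n // -sqrtrM; last by apply: mulr_ge0; lra.
congr Num.sqrt; field; apply/andP; split; lra.
Qed.

Theorem corollary2p3 (R : realType) (n : nat) (e : rel 'I_n) (rho : R) :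
  (1 < n)%N ->
  simple_graph e ->
  connected_graph e ->
  is_ABC_spectral_radius e rho ->
  let m := nedges e in
  let Delta := maxdeg e in
  let k : int := Num.ceil ((2 * m%:R - n%:R + 1) / Delta%:R : R) in
  rho <= Num.sqrt (Delta%:R + k%:~R - 2).
Proof.
move=> n1 sg conn [eig _]; rewrite /=.
set m := nedges e. set Delta := maxdeg e. set k := Num.ceil _.
have dp := deg_pos n1 conn.
have hD : forall i, (deg e i <= Delta)%N by move=> i; apply: leq_bigmax.
have Dp : (0 < Delta)%N.
  by apply: leq_trans (hD (Ordinal (ltnW n1))); apply: dp.
have nb := nbsum n1 sg conn.
have hk0 : (2 * m%:R - n%:R + 1) / Delta%:R <= (k%:~R : R) by apply: ceil_ge.
have Dr : (0 : R) < Delta%:R by rewrite ltr0n.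
have hk1 : 2 * m%:R - n%:R + 1 <= (Delta%:R * k%:~R : R).
  by move: hk0; rewrite ler_pdivrMr // [k%:~R * _]mulrC.
have hm : (n <= 2 * m + 1)%N.
  have := nb (Ordinal (ltnW n1)); lia.
have k0 : (0 <= k)%R.
  have : (0 : R) <= Delta%:R * k%:~R.
    apply: le_trans hk1.
    have : (n%:R : R) <= (2 * m + 1)%N%:R by rewrite ler_nat.
    rewrite natrD natrM /=. lra.
  by rewrite pmulr_rge0 // ler0z.
have [kn hkn] : exists kn : nat, k = kn%:Z by exists `|k|%N; rewrite gez0_abs.
rewrite hkn in hk1 *.
have hkn' : (2 * m + 1 <= n + Delta * kn)%N.
  have : ((2 * m + 1)%N%:R : R) <= (n + Delta * kn)%N%:R.
    rewrite !natrD !natrM /=; move: hk1 => /=; lra.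
  by rewrite ler_nat.
set d := deg e in dp hD nb.
have hd : forall i, (\sum_(l | e i l) 1 = d i)%N.
  by move=> i; rewrite sum1_card /d /deg; apply: eq_card => x; rewrite inE.
have hdR : forall i, \sum_(l | e i l) (1 : R) = (d i)%:R.
  by move=> i; rewrite -hd natr_sum.
set Br : R := Delta%:R + kn%:R - 2.
have hx : forall i, \sum_(l | e i l) ((d i)%:R + (d l)%:R - 2) <= (d i)%:R * Br.
  move=> i.
  have hA : (\sum_(l | e i l) d l <= d i * Delta)%N.
    rewrite -hd big_distrl /=; apply: leq_sum => l _; rewrite mul1n; apply: hD.
  have hn := natkey (dp i) (hD i) hA (nb i) hkn'.
  move: hn; rewrite -(ler_nat R) !natrD !natrM natr_sum => hn.
  have -> : \sum_(l | e i l) ((d i)%:R + (d l)%:R - 2) =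
            ((d i)%:R - 2) * (d i)%:R + \sum_(l | e i l) ((d l)%:R : R).
    rewrite -hdR mulr_sumr -big_split /=; apply: eq_bigr => l _; rewrite mulr1; ring.
  rewrite /Br; lra.
move/eigenvalueP: eig => [v hv vn0].
set s := fun i j => Num.sqrt (((d j)%:R + (d i)%:R - 2) / ((d j)%:R * (d i)%:R) : R).
have hv' : forall i, rho * v 0 i = \sum_(j | e i j) v 0 j * s i j.
  move=> i; have := congr1 (fun w : 'rV[R]_n => w 0 i) hv; rewrite !mxE /= => <-.
  rewrite [RHS]big_mkcond /=; apply: eq_bigr => j _; rewrite /ABC_matrix mxE (proj1 sg i j).
  by case: (e j i); rewrite ?mulr0.
have sq0 : forall j, 0 < Num.sqrt ((d j)%:R : R) by move=> j; rewrite sqrtr_gt0 ltr0n.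
set u := fun j => v 0 j / Num.sqrt ((d j)%:R : R).
have hvu : forall j, v 0 j = u j * Num.sqrt ((d j)%:R : R).
  by move=> j; rewrite /u divfK // gt_eqF.
clearbody u.
have [i imax] : exists i, forall j, `|u j| <= `|u i|.
  case: (@arg_maxP _ _ _ (Ordinal (ltnW n1)) xpredT (fun j => `|u j|) isT) => i _ H.
  by exists i => j; exact: H.
have ui0 : 0 < `|u i|.
  rewrite lt_neqAle normr_ge0 andbT eq_sym; apply/negP => /eqP ui0.
  move/negP: vn0; apply; apply/eqP/rowP => j; rewrite mxE hvu.
  have := imax j; rewrite ui0 normr_le0 => /eqP ->; by rewrite mul0r.
have s0 : forall i j, 0 <= s i j by move=> *; apply: sqrtr_ge0.
have h1 : `|rho| * Num.sqrt ((d i)%:R : R) <= \sum_(j | e i j) Num.sqrt ((d j)%:R : R) * s i j.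
  have : `|rho| * (`|u i| * Num.sqrt ((d i)%:R : R)) <= `|u i| * \sum_(j | e i j) Num.sqrt ((d j)%:R : R) * s i j.
    have -> : `|rho| * (`|u i| * Num.sqrt ((d i)%:R : R)) = `|\sum_(j | e i j) v 0 j * s i j|.
      by rewrite -hv' normrM hvu normrM (ger0_norm (ltW (sq0 i))).
    apply: le_trans (ler_norm_sum _ _ _) _.
    rewrite mulr_sumr; apply: ler_sum => j _.
    rewrite normrM (ger0_norm (s0 _ _)) hvu normrM (ger0_norm (ltW (sq0 j))).
    rewrite mulrA; apply: ler_wpM2r => //; apply: ler_wpM2r; [exact: ltW | exact: imax].
  rewrite mulrCA ler_pM2l //.
have h2 : `|rho| * (d i)%:R <= \sum_(j | e i j) Num.sqrt ((d i)%:R + (d j)%:R - 2 : R).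
  have ee : ((d i)%:R : R) = Num.sqrt ((d i)%:R : R) * Num.sqrt ((d i)%:R : R).
    by rewrite -expr2 sqr_sqrtr // ler0n.
  rewrite {1}ee mulrA; apply: le_trans (ler_wpM2r (ltW (sq0 i)) h1) _.
  rewrite mulr_suml; apply: ler_sum => j _.
  by rewrite mulrC mulrA entry_id.
have [rle0|rgt0] := lerP rho 0.
  by apply: le_trans rle0 _; apply: sqrtr_ge0.
rewrite gtr0_norm // in h2.
have h3 : 2 * rho * \sum_(j | e i j) Num.sqrt ((d i)%:R + (d j)%:R - 2 : R)
          <= \sum_(j | e i j) ((d i)%:R + (d j)%:R - 2) + rho ^+ 2 * (d i)%:R.
  have -> : rho ^+ 2 * (d i)%:R = \sum_(j | e i j) rho ^+ 2.
    by rewrite -hdR mulr_sumr; apply: eq_bigr => j _; rewrite mulr1.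
  rewrite mulr_sumr -big_split /=; apply: ler_sum => j _.
  apply: amgm.
  have := dp i; have := dp j; rewrite -!(ler1n R); lra.
have hi := hx i.
have dip : (0 : R) < (d i)%:R by rewrite ltr0n.
move: h2 h3 hi.
set S := \sum_(j | e i j) _.
set X := \sum_(j | e i j) _.
move=> h2 h3 hi.
have hr2 : rho ^+ 2 <= Br.
  have : (d i)%:R * (rho ^+ 2) <= (d i)%:R * Br by nra.
  by rewrite ler_pM2l.
rewrite -(gtr0_norm rgt0) -sqrtr_sqr ler_sqrt //.
apply: le_trans hr2; exact: sqr_ge0.
Qed.
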